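(* Let $\mathcal K$ be a compact subset of $\mathcal L_{\mathbb C}$. There are constants $r_0>0$ and $C<\infty$ such that for any $x\in\mathbf S^3$, $L\in\mathcal K$ and $0<\delta\le r\le r_0$, \[\eta_L(A(x,r,\delta))\le C\delta^{1/2},\qquad\text{where }A(x,r,\delta)=\{y\in\mathbf S^3:r\le d(x,y)\le r+\delta\}.\]
   Context: On $\mathbb{C}^3$: $u\cdot v=\sum u_i\bar v_i$, $\|u\|=\sqrt{u\cdot u}$, $\langle u,v\rangle=u_0\bar v_0-u_1\bar v_1-u_2\bar v_2$, $q(u)=\langle u,u\rangle$, $\|u\wedge v\|^2=\|u\|^2\|v\|^2-|u\cdot v|^2$. $\mathbf S^3=\{u\in\mathbb P^2_{\mathbb C}:q(u)=0\}$ with visual metric $d(u,v)=\sqrt{|\langle u,v\rangle|/(\|u\|\|v\|)}$. $\mathcal L_{\mathbb C}=\{w\in\mathbb P^2_{\mathbb C}:q(w)<0\}$ with metric $d_E(u,v)=\|u\wedge v\|/(\|u\|\|v\|)$; $w$ is identified with the chain $L_w=\{u\in\mathbf S^3:\langle u,w\rangle=0\}$. For a chain $L$, $\eta_L$ is the $2$-dimensional Hausdorff measure on $L$ with respect to $d$. *)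

(* Defs.v *)
From HB Require Import structures.
From mathcomp Require Import all_boot all_order all_algebra.
From mathcomp Require Import all_classical all_reals all_analysis.
From mathcomp Require Import complex.

Set Implicit Arguments.
Unset Strict Implicit.
Unset Printing Implicit Defensive.

Import Order.TTheory GRing.Theory Num.Theory.
Import numFieldNormedType.Exports.
Local Open Scope classical_set_scope.
Local Open Scope ring_scope.

(* Points of C^3 are triples (u0, u1, u2).  Points of P^2_C are represented
   by nonzero vectors; every quantity below is invariant under scaling. *)
Definition C3 (R : realType) := (R[i] * R[i] * R[i])%type.

Section Defs.
Variable R : realType.
Implicit Types u v w : C3 R.

Definition cabs (z : R[i]) : R := Num.sqrt (complex.Re z ^+ 2 + complex.Im z ^+ 2).

Definition c0 u : R[i] := u.1.1.
Definition c1 u : R[i] := u.1.2.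
Definition c2 u : R[i] := u.2.

Definition C3_zero : C3 R := (0, 0, 0).

Definition edot u v : R[i] :=
  (c0 u * (c0 v)^* + c1 u * (c1 v)^* + c2 u * (c2 v)^*)%C.
Definition enorm u : R :=
  Num.sqrt (cabs (c0 u) ^+ 2 + cabs (c1 u) ^+ 2 + cabs (c2 u) ^+ 2).
Definition herm u v : R[i] :=
  (c0 u * (c0 v)^* - c1 u * (c1 v)^* - c2 u * (c2 v)^*)%C.
Definition qform u : R := complex.Re (herm u u).

Definition S3 : set (C3 R) := [set u | u <> C3_zero /\ qform u = 0].

Definition dvis u v : R := Num.sqrt (cabs (herm u v) / (enorm u * enorm v)).

Definition chain w : set (C3 R) := [set u | S3 u /\ herm u w = 0].

(* diameter w.r.t. d (diam of the empty set is 0) *)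
Definition ddiam (A : set (C3 R)) : \bar R :=
  ereal_sup ([set 0%E] `|` [set (dvis x y)%:E | x in A & y in A]).

Definition haus2_approx (delta : R) (A : set (C3 R)) : \bar R :=
  ereal_inf [set (\sum_(0 <= i <oo) (ddiam (F i) * ddiam (F i)))%E |
              F in [set F : nat -> set (C3 R) |
                     A `<=` \bigcup_i F i /\ forall i, (ddiam (F i) <= delta%:E)%E]].

Definition haus2 (A : set (C3 R)) : \bar R :=
  ereal_sup [set haus2_approx delta A | delta in [set delta : R | 0 < delta]].

Definition eta_L (w : C3 R) (A : set (C3 R)) : \bar R := haus2 (chain w `&` A).

Definition annulus x (r delta : R) : set (C3 R) :=
  [set y | S3 y /\ r <= dvis x y <= r + delta].

(* C^3 identified with R^6 (for its topology) *)
Definition realify u : (R * R) * (R * R) * (R * R) :=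
  ((complex.Re (c0 u), complex.Im (c0 u)), (complex.Re (c1 u), complex.Im (c1 u)), (complex.Re (c2 u), complex.Im (c2 u))).

End Defs.

(* Main.v *)
Require Import Defs.
From HB Require Import structures.
From mathcomp Require Import all_boot all_order all_algebra.
From mathcomp Require Import all_classical all_reals all_analysis.
From mathcomp Require Import complex.
From mathcomp Require Import ring lra.

Import Order.TTheory GRing.Theory Num.Theory.
Import numFieldNormedType.Exports.
Local Open Scope classical_set_scope.
Local Open Scope ring_scope.
Set Implicit Arguments. Unset Strict Implicit.

Import ComplexField.Normc.
Section Cx.
Variable R : realType.
Implicit Types z u : R[i].

Lemma cabsE z : cabs z = normc z. Proof. by case: z. Qed.
Lemma cabs_ge0 z : 0 <= cabs z. Proof. exact: sqrtr_ge0. Qed.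
Lemma cabs_sq z : cabs z ^+ 2 = complex.Re z ^+ 2 + complex.Im z ^+ 2.
Proof. by rewrite /cabs sqr_sqrtr // addr_ge0 // sqr_ge0. Qed.
Lemma cabsM z u : cabs (z * u) = cabs z * cabs u.
Proof. by rewrite !cabsE normcM. Qed.
Lemma cabsD z u : cabs (z + u) <= cabs z + cabs u.
Proof. by rewrite !cabsE le_normcD. Qed.
Lemma cabsN z : cabs (- z) = cabs z.
Proof. by case: z => a b; rewrite /cabs /= !sqrrN. Qed.
Lemma cabsJ z : cabs (z^*)%C = cabs z.
Proof. by case: z => a b; rewrite /cabs /= !sqrrN. Qed.
Lemma cabsB z u : cabs z - cabs u <= cabs (z - u).
Proof. have := cabsD (z - u) u; rewrite subrK; lra. Qed.
Lemma cabsB2 z u : cabs (z - u) <= cabs z + cabs u.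
Proof. by have := cabsD z (- u); rewrite cabsN. Qed.
Lemma cabs_eq0 z : cabs z = 0 -> z = 0.
Proof. by rewrite cabsE; apply: eq0_normc. Qed.
Lemma cabsR (x : R) : cabs (x%:C)%C = `|x|.
Proof. by rewrite /cabs /= expr0n /= addr0 sqrtr_sqr. Qed.
Lemma cabsV z : cabs (z^-1) = (cabs z)^-1.
Proof. by rewrite !cabsE normcV. Qed.
Lemma mulcJ z : z * (z^*)%C = ((cabs z ^+ 2)%:C)%C.
Proof.
rewrite cabs_sq; case: z => a b /=; apply/eqP; rewrite eq_complex /=.
apply/andP; split; apply/eqP; ring.
Qed.
Lemma ReD z u : complex.Re (z + u) = complex.Re z + complex.Re u.
Proof. by case: z; case: u. Qed.
Lemma ReN z : complex.Re (- z) = - complex.Re z.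
Proof. by case: z. Qed.
Lemma ReR (x : R) : complex.Re (x%:C)%C = x.
Proof. by []. Qed.
Lemma ReJ z : complex.Re (z^*)%C = complex.Re z.
Proof. by case: z. Qed.
Lemma Re_le z : `|complex.Re z| <= cabs z.
Proof.
rewrite /cabs -sqrtr_sqr; apply: ler_wsqrtr; rewrite lerDl; exact: sqr_ge0.
Qed.
Lemma Im_le z : `|complex.Im z| <= cabs z.
Proof.
rewrite /cabs -sqrtr_sqr; apply: ler_wsqrtr; rewrite lerDr; exact: sqr_ge0.
Qed.
Lemma cabs_sqC z : ((cabs z ^+ 2)%:C)%C = z * (z^*)%C.
Proof. by rewrite mulcJ. Qed.
Lemma realC_inj (x y : R) : (x%:C)%C = (y%:C)%C -> x = y.
Proof. by case. Qed.
End Cx.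


Section Haus.
Variable R : realType.
Implicit Types A : set (C3 R).

Definition good (eta : R) A (n : nat) (s : R) :=
  exists (F : nat -> set (C3 R)) (D : nat -> R),
   [/\ (forall y, A y -> exists2 i, (i < n)%N & F i y),
    (forall i y y', F i y -> F i y' -> dvis y y' <= D i),
    (forall i, 0 <= D i <= eta) &
    \sum_(0 <= i < n) D i ^+ 2 <= s].

Lemma ddiam_le (F : set (C3 R)) (D : R) : 0 <= D ->
  (forall y y', F y -> F y' -> dvis y y' <= D) ->
  (0 <= ddiam F)%E /\ (ddiam F <= D%:E)%E.
Proof.
move=> D0 hF; split.
  by apply: ereal_sup_ubound; left.
apply: ge_ereal_sup => z [->|]; first by rewrite lee_fin.
by move=> [y Fy [y' Fy' <-]]; rewrite lee_fin; apply: hF.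
Qed.

Lemma ddiam0 : ddiam (@set0 (C3 R)) = 0%E.
Proof.
have [h0 h1] := ddiam_le (F := set0) (D := 0) (lexx 0) (fun _ _ f _ => match f with end).
by apply/eqP; rewrite eq_le h0 h1.
Qed.

Lemma good_approx eta A n s : good eta A n s -> (haus2_approx eta A <= s%:E)%E.
Proof.
move=> [F [D [hcov hF hD hs]]].
pose F' i := if (i < n)%N then F i else set0.
have hF' i : (0 <= ddiam (F' i))%E /\ (ddiam (F' i) <= (if (i < n)%N then D i else 0)%:E)%E.
  rewrite /F'; case: ifP => _; last by rewrite ddiam0.
  apply: ddiam_le; [by case/andP: (hD i)| exact: hF].
apply: (@le_trans _ _ (\sum_(0 <= i <oo) (ddiam (F' i) * ddiam (F' i)))%E).
  apply: ereal_inf_lbound; exists F' => //; split.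
    move=> y /hcov [i ilt Fiy]; rewrite /bigcup /=; exists i => //; by rewrite /F' ilt.
  move=> i; case: (hF' i) => _ h; apply: (le_trans h); rewrite lee_fin.
  case: ifP => _; first by case/andP: (hD i).
  by case/andP: (hD 0) => a b; apply: le_trans a b.
rewrite (nneseries_split 0 n); last by move=> k _; case: (hF' k) => h _; apply: mule_ge0.
rewrite (@eseries0 _ _ (0 + n)%N); last first.
  by move=> i hi _; rewrite /F' ltnNge hi /= ddiam0 mule0.
rewrite adde0 add0n.
apply: (@le_trans _ _ (\sum_(0 <= k < n) ((D k) ^+ 2)%:E)%E).
  rewrite big_nat_cond [X in (_ <= X)%E]big_nat_cond.
  apply: lee_sum => i /andP [/andP [_ ilt] _].
  case: (hF' i) => h0; rewrite ilt => h1.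
  by rewrite expr2 EFinM; apply: lee_pmul.
by rewrite sumEFin lee_fin.
Qed.


Lemma haus_le A (s : R) :
  (forall eta, 0 < eta -> (haus2_approx eta A <= s%:E)%E) -> (haus2 A <= s%:E)%E.
Proof. by move=> h; apply: ge_ereal_sup => _ [eta heta <-]; apply: h. Qed.

Lemma good_sub eta A B n s : A `<=` B -> good eta B n s -> good eta A n s.
Proof.
move=> AB [F [D [h1 h2 h3 h4]]]; exists F, D; split => //.
by move=> y /AB /h1.
Qed.

Lemma good_union eta A B n m s t :
  good eta A n s -> good eta B m t -> good eta (A `|` B) (n + m) (s + t).
Proof.
move=> [F [D [h1 h2 h3 h4]]] [G [E [k1 k2 k3 k4]]].
exists (fun i => if (i < n)%N then F i else G (i - n)%N).
exists (fun i => if (i < n)%N then D i else E (i - n)%N).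
split.
- move=> y [/h1 [i ilt Fy]|/k1 [i ilt Gy]].
    by exists i; [apply: ltn_addr | rewrite ilt].
  exists (n + i)%N; first by rewrite ltn_add2l.
  by rewrite ltnNge leq_addr /= addKn.
- by move=> i y y'; case: ifP => _; [apply: h2 | apply: k2].
- by move=> i; case: ifP.
rewrite (@big_cat_nat _ _ _ n) //=; last exact: leq_addr.
apply: lerD.
  rewrite (eq_big_nat _ _ (F2 := fun i => D i ^+ 2)) //.
  by move=> i /andP [_ ->].
rewrite -{1}[n]add0n big_addn.
have -> : (n + m - n = m)%N by rewrite addKn.
rewrite (eq_big_nat _ _ (F2 := fun i => E i ^+ 2)) //.
by move=> i _; rewrite ltnNge leq_addl /= addnK.
Qed.

Lemma good_mono eta A n s s' : s <= s' -> good eta A n s -> good eta A n s'.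
Proof.
move=> ss' [F [D [h1 h2 h3 h4]]]; exists F, D; split => //; exact: le_trans ss'.
Qed.

Lemma find_k (N : nat) (h v : R) : (0 < N)%N -> 0 <= h -> 0 <= v <= N%:R * h ->
  exists2 k, (k < N)%N & k%:R * h <= v <= k.+1%:R * h.
Proof.
case: N => // N _ h0; elim: N => [|N IH] /andP [v0 vle].
  by exists 0%N => //; rewrite mul0r v0.
have [vle'|vgt] := leP v (N.+1%:R * h).
  by case: IH; [rewrite v0 vle' | move=> k kl hk; exists k => //; apply: ltnW].
by exists N.+1 => //; rewrite (ltW vgt).
Qed.

Lemma good_piece (S : set (C3 R)) (f : C3 R -> R) (l eta : R) (N : nat) :
  0 <= l -> (0 < N)%N -> 2 * l <= N%:R * eta ^+ 2 -> 0 < eta ->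
  (forall y y', S y -> S y' -> dvis y y' ^+ 2 <= `|f y - f y'|) ->
  (forall y y', S y -> S y' -> `|f y - f y'| <= l) ->
  good eta S N (2 * l).
Proof.
move=> l0 N0 hN eta0 hd hl.
have Nr0 : 0 < N%:R :> R by rewrite ltr0n.
pose h := 2 * l / N%:R.
have h0 : 0 <= h by rewrite /h divr_ge0 // ?mulr_ge0 // ltW.
have hNh : N%:R * h = 2 * l by rewrite /h mulrC divfK // gt_eqF.
have heta : h <= eta ^+ 2.
  by rewrite /h ler_pdivrMr // [_ * N%:R]mulrC.
have [[ys Sys]|Sn] := pselect (exists y, S y); last first.
- exists (fun _ => set0), (fun _ => 0); split => //.
  + by move=> y Sy; exfalso; apply: Sn; exists y.
  + by move=> i; rewrite lexx ltW.
  + rewrite big1 //; first by rewrite mulr_ge0.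
    by move=> i _; rewrite expr0n.
pose t0 := f ys - l.
exists (fun k => [set y | S y /\ t0 + k%:R * h <= f y <= t0 + k.+1%:R * h]).
exists (fun _ => Num.sqrt h); split.
- move=> y Sy.
  have [k kN hk] : exists2 k, (k < N)%N & k%:R * h <= f y - t0 <= k.+1%:R * h.
    apply: find_k => //; rewrite hNh /t0.
    have := hl _ _ Sy Sys; rewrite ler_norml; case/andP => a b.
    apply/andP; split; lra.
  by exists k => //; split => //; move: hk => /andP [a b]; apply/andP; split; lra.
- move=> i y y' [Sy /andP [a b]] [Sy' /andP [c d]].
  have dv0 : 0 <= dvis y y' by apply: sqrtr_ge0.
  rewrite -(ger0_norm dv0) -sqrtr_sqr; apply: ler_wsqrtr.
  apply: (le_trans (hd _ _ Sy Sy')).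
  rewrite ler_norml; apply/andP; split; rewrite mulrSr in b d; lra.
- move=> i; rewrite sqrtr_ge0 /=.
  by rewrite -(ger0_norm (ltW eta0)) -sqrtr_sqr; apply: ler_wsqrtr.
rewrite big_const_nat subn0 sqr_sqrtr //.
rewrite -hNh mulr_natl.
by elim: (N) => [|k IH] //=; rewrite mulrS lerD2l.
Qed.

End Haus.


Section Circ.
Variable R : realType.


Lemma sq_le_abs (x y : R) : 0 <= y -> x ^+ 2 <= y ^+ 2 -> `|x| <= y.
Proof.
move=> y0 h; rewrite -(ger0_norm y0); rewrite -ler_sqr ?normr_ge0 //.
by rewrite !real_normK ?num_real.
Qed.

Lemma abs_sq_le (x y : R) : `|x| <= `|y| -> x ^+ 2 <= y ^+ 2.
Proof.
move=> h; rewrite -[x ^+ 2]real_normK ?num_real // -[y ^+ 2]real_normK ?num_real //.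
by rewrite ler_sqr ?normr_ge0 ?nnegrE ?normr_ge0.
Qed.

Lemma circ_a (a b a' b' : R) : a ^+ 2 + b ^+ 2 = 1 -> a' ^+ 2 + b' ^+ 2 = 1 ->
  `|a| <= `|b| -> `|a'| <= `|b'| -> 0 <= b * b' -> `|b - b'| <= `|a - a'|.
Proof.
move=> h1 h2 h3 h4 h5.
apply: sq_le_abs; first exact: normr_ge0.
rewrite real_normK ?num_real //.
have e : (b - b') * (b + b') = (a' - a) * (a' + a).
  have -> : (b - b') * (b + b') = b ^+ 2 - b' ^+ 2 by ring.
  have -> : (a' - a) * (a' + a) = a' ^+ 2 - a ^+ 2 by ring.
  lra.
have ha : (a + a') ^+ 2 <= (b + b') ^+ 2.
  have : `|a + a'| <= `|b + b'|.
    apply: (le_trans (ler_normD _ _)).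
    have -> : `|b + b'| = `|b| + `|b'|.
      case: (lerP 0 b) => hb; case: (lerP 0 b') => hb'.
      - by rewrite !ger0_norm // addr_ge0.
      - have : b * b' = 0.
          by apply/eqP; rewrite eq_le h5 andbT; apply: mulr_ge0_le0 => //; exact: ltW.
        move/eqP; rewrite mulf_eq0 (lt_eqF hb') orbF => /eqP ->.
        by rewrite add0r normr0 add0r.
      - have : b * b' = 0.
          by apply/eqP; rewrite eq_le h5 andbT; apply: mulr_le0_ge0 => //; exact: ltW.
        move/eqP; rewrite mulf_eq0 (lt_eqF hb) /= => /eqP ->.
        by rewrite addr0 normr0 addr0.
      - by rewrite (ltr0_norm hb) (ltr0_norm hb') ltr0_norm ?opprD //; lra.
    exact: lerD.
  by apply: abs_sq_le.
have hb2 : 1 / 2 <= b ^+ 2.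
  have : a ^+ 2 <= b ^+ 2 by apply: abs_sq_le.
  lra.
have hpos : 0 < (b + b') ^+ 2.
  have hb2' : 1 / 2 <= b' ^+ 2.
    have : a' ^+ 2 <= b' ^+ 2 by apply: abs_sq_le.
    lra.
  have -> : (b + b') ^+ 2 = b ^+ 2 + b' ^+ 2 + 2 * (b * b') by ring.
  lra.
have : (b - b') ^+ 2 * (b + b') ^+ 2 <= (a - a') ^+ 2 * (b + b') ^+ 2.
  rewrite -exprMn e exprMn.
  have -> : (a' - a) ^+ 2 = (a - a') ^+ 2 by ring.
  rewrite [(a' + a)]addrC.
  by apply: ler_wpM2l => //; apply: sqr_ge0.
by rewrite ler_pM2r.
Qed.

Lemma circ_c (a b a' b' : R) : a ^+ 2 + b ^+ 2 = 1 -> a' ^+ 2 + b' ^+ 2 = 1 ->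
  0 <= b * b' -> (b - b') ^+ 2 <= 2 * `|a - a'|.
Proof.
move=> h1 h2 h5.
have e : (b - b') * (b + b') = (a' - a) * (a' + a).
  have -> : (b - b') * (b + b') = b ^+ 2 - b' ^+ 2 by ring.
  have -> : (a' - a) * (a' + a) = a' ^+ 2 - a ^+ 2 by ring.
  lra.
have s1 : (b - b') ^+ 2 <= `|(b - b') * (b + b')|.
  rewrite normrM -[(b - b') ^+ 2]real_normK ?num_real // expr2.
  apply: ler_wpM2l; first exact: normr_ge0.
  apply: sq_le_abs; first exact: normr_ge0.
  rewrite real_normK ?num_real //.
  have -> : (b + b') ^+ 2 = (b - b') ^+ 2 + 4 * (b * b') by ring.
  lra.
apply: (le_trans s1); rewrite e normrM -normrN opprB.
rewrite mulrC; apply: ler_wpM2r; first exact: normr_ge0.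
apply: (le_trans (ler_normD _ _)).
have : `|a'| <= 1 by apply: sq_le_abs => //; rewrite expr1n; have := sqr_ge0 b'; lra.
have : `|a| <= 1 by apply: sq_le_abs => //; rewrite expr1n; have := sqr_ge0 b; lra.
lra.
Qed.
End Circ.


Section Geo.
Variable R : realType.
Implicit Types y u : C3 R.

Local Notation cj := (@conjc R).
Local Notation "x %:C" := (real_complex R x).

Lemma realCD (x y : R) : (x + y)%:C = x%:C + y%:C.
Proof. by apply/eqP; rewrite eq_complex /= addr0 !eqxx. Qed.
Lemma realCB (x y : R) : (x - y)%:C = x%:C - y%:C.
Proof. by apply/eqP; rewrite eq_complex /= subr0 !eqxx. Qed.
Lemma realCM (x y : R) : (x * y)%:C = x%:C * y%:C.
Proof. by apply/eqP; rewrite eq_complex /= !mulr0 !mul0r subr0 addr0 !eqxx. Qed.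
Lemma realCN (x : R) : (- x)%:C = - x%:C.
Proof. by apply/eqP; rewrite eq_complex /= oppr0 !eqxx. Qed.
Lemma realC1 : (1 : R)%:C = 1.
Proof. by []. Qed.
Lemma conjR (x : R) : (cj (x%:C)) = x%:C.
Proof. by apply/eqP; rewrite eq_complex /= oppr0 !eqxx. Qed.

Lemma conjD (z u : R[i]) : (cj (z + u)) = (cj z) + (cj u).
Proof. by case: z; case: u => a b c d; apply/eqP; rewrite eq_complex /= opprD !eqxx. Qed.
Lemma conjN (z : R[i]) : (cj (- z)) = - (cj z).
Proof. by case: z => a b; apply/eqP; rewrite eq_complex /= !eqxx. Qed.
Lemma conjB (z u : R[i]) : (cj (z - u)) = (cj z) - (cj u).
Proof. by case: z; case: u => a b c d; apply/eqP; rewrite eq_complex /= opprD !eqxx. Qed.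
Lemma conjM (z u : R[i]) : (cj (z * u)) = (cj z) * (cj u).
Proof.
case: z; case: u => a b c d; apply/eqP; rewrite eq_complex /=.
by apply/andP; split; apply/eqP; ring.
Qed.
Lemma conjK (z : R[i]) : (cj ((cj z))) = z.
Proof. by case: z => a b; rewrite /conjc opprK. Qed.

Lemma qformE u : qform u = cabs (c0 u) ^+ 2 - cabs (c1 u) ^+ 2 - cabs (c2 u) ^+ 2.
Proof. by rewrite /qform /herm !mulcJ -!rmorphB. Qed.

Lemma enormE u : enorm u ^+ 2 = cabs (c0 u) ^+ 2 + cabs (c1 u) ^+ 2 + cabs (c2 u) ^+ 2.
Proof. by rewrite /enorm sqr_sqrtr // !addr_ge0 // sqr_ge0. Qed.

Lemma enorm_S3 u : qform u = 0 -> enorm u = Num.sqrt 2 * cabs (c0 u).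
Proof.
rewrite qformE => h; rewrite /enorm.
have -> : cabs (c0 u) ^+ 2 + cabs (c1 u) ^+ 2 + cabs (c2 u) ^+ 2 = 2 * cabs (c0 u) ^+ 2 by lra.
by rewrite sqrtrM // sqrtr_sqr ger0_norm // cabs_ge0.
Qed.

Lemma S3_c0 u : S3 u -> c0 u != 0.
Proof.
case: u => [[u0 u1] u2] [hne hq]; apply/eqP => h0; apply: hne.
move: hq h0; rewrite qformE /c0 /c1 /c2 /= => hq h0; move: hq; rewrite h0.
have c00 : cabs (0 : R[i]) = 0 by rewrite /cabs /= expr0n /= addr0 sqrtr0.
rewrite c00 expr0n /= sub0r => h.
have h1 : cabs u1 ^+ 2 = 0 by have := sqr_ge0 (cabs u1); have := sqr_ge0 (cabs u2); lra.
have h2 : cabs u2 ^+ 2 = 0 by have := sqr_ge0 (cabs u1); have := sqr_ge0 (cabs u2); lra.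
move/eqP: h1; rewrite sqrf_eq0 => /eqP /cabs_eq0 ->.
by move/eqP: h2; rewrite sqrf_eq0 => /eqP /cabs_eq0 ->.
Qed.

Lemma cabs_gt0 (z : R[i]) : z != 0 -> 0 < cabs z.
Proof.
move=> hz; rewrite lt_neqAle cabs_ge0 andbT; apply/eqP => h.
by move/eqP: hz; apply; apply: cabs_eq0.
Qed.

Lemma dvis_sq u v : dvis u v ^+ 2 = cabs (herm u v) / (enorm u * enorm v).
Proof.
by rewrite /dvis sqr_sqrtr // divr_ge0 ?cabs_ge0 // mulr_ge0 // sqrtr_ge0.
Qed.

Variable w : C3 R.
Definition Sw := cabs (c1 w) ^+ 2 + cabs (c2 w) ^+ 2.
Definition Qw := Sw - cabs (c0 w) ^+ 2.
Definition tau u := c1 u * (cj (c1 w)) + c2 u * (cj (c2 w)).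
Definition sig u := - (c1 u * c2 w) + c2 u * c1 w.

Lemma QwE : Qw = - qform w.
Proof. rewrite /Qw /Sw qformE; lra. Qed.

Lemma lag a b : (Sw%:C) * (c1 a * (cj (c1 b)) + c2 a * (cj (c2 b))) =
  tau a * (cj (tau b)) + sig a * (cj (sig b)).
Proof.
rewrite /Sw realCD !cabs_sqC /tau /sig.
rewrite !(conjD, conjN, conjM, conjK).
ring.
Qed.


Lemma realC_neq0 (t : R) : t != 0 -> t%:C != 0.
Proof. by move=> h; apply/eqP => /(congr1 (@complex.Re R)) /= /eqP; rewrite (negbTE h). Qed.

Lemma ReE (z : R[i]) : (2 * complex.Re z)%:C = z + cj z.
Proof. by case: z => a b; apply/eqP; rewrite eq_complex /= subrr !eqxx andbT; apply/eqP; ring. Qed.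

Lemma cabs_le_ReIm (z : R[i]) : cabs z <= `|complex.Re z| + `|complex.Im z|.
Proof.
have h0 : 0 <= `|complex.Re z| + `|complex.Im z| by rewrite addr_ge0.
rewrite -(ger0_norm (cabs_ge0 z)); apply: sq_le_abs => //.
rewrite cabs_sq -[complex.Re z ^+ 2]real_normK ?num_real // -[complex.Im z ^+ 2]real_normK ?num_real //.
have := normr_ge0 (complex.Re z); have := normr_ge0 (complex.Im z); nra.
Qed.

Lemma chain_tau y : herm y w = 0 -> tau y = c0 y * cj (c0 w).
Proof.
move=> h; have -> : tau y = c0 y * cj (c0 w) - herm y w by rewrite /herm /tau; ring.
by rewrite h subr0.
Qed.

Hypothesis hQ : 0 < Qw.

Lemma Sw_ge : Qw <= Sw.
Proof. rewrite /Qw; have := sqr_ge0 (cabs (c0 w)); lra. Qed.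
Lemma Sw_gt0 : 0 < Sw.
Proof. exact: lt_le_trans hQ Sw_ge. Qed.

Definition sqQ := Num.sqrt Qw.
Lemma sqQ_gt0 : 0 < sqQ. Proof. by rewrite sqrtr_gt0. Qed.
Lemma sqQQ : sqQ%:C * sqQ%:C = Qw%:C.
Proof. by rewrite -realCM -expr2 sqr_sqrtr // ltW. Qed.
Lemma SwE : Sw%:C = sqQ%:C * sqQ%:C + c0 w * cj (c0 w).
Proof. by rewrite sqQQ mulcJ -realCD /Qw subrK. Qed.

Definition zeta y := sig y / (sqQ%:C * c0 y).

Lemma sig_sq y : S3 y -> herm y w = 0 -> cabs (sig y) ^+ 2 = Qw * cabs (c0 y) ^+ 2.
Proof.
move=> [yne hq] hh.
have e := lag y y; rewrite chain_tau // in e.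
move: hq; rewrite qformE => hq.
rewrite !mulcJ -!realCD -realCM in e.
move/realC_inj: e; rewrite cabsM cabsJ /Qw => e.
have -> : cabs (sig y) ^+ 2 = Sw * (cabs (c1 y) ^+ 2 + cabs (c2 y) ^+ 2) - (cabs (c0 y) * cabs (c0 w)) ^+ 2 by rewrite e; ring.
have -> : cabs (c1 y) ^+ 2 + cabs (c2 y) ^+ 2 = cabs (c0 y) ^+ 2 by lra.
ring.
Qed.

Lemma cabs_sig y : S3 y -> herm y w = 0 -> cabs (sig y) = sqQ * cabs (c0 y).
Proof.
move=> hy hh; have e := sig_sq hy hh.
rewrite -[cabs (sig y)]ger0_norm ?cabs_ge0 // -sqrtr_sqr e sqrtrM ?ltW //.
by rewrite sqrtr_sqr ger0_norm // cabs_ge0.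
Qed.

Lemma sig_zeta y : S3 y -> sig y = sqQ%:C * c0 y * zeta y.
Proof.
move=> hy; rewrite /zeta mulrC divfK //.
by rewrite mulf_neq0 // ?S3_c0 // realC_neq0 // gt_eqF // sqQ_gt0.
Qed.

Lemma cabs_zeta y : S3 y -> herm y w = 0 -> cabs (zeta y) = 1.
Proof.
move=> hy hh; rewrite /zeta cabsM cabsV cabsM cabsR cabs_sig //.
rewrite ger0_norm ?sqrtr_ge0 // mulfV //.
by rewrite mulf_neq0 // gt_eqF // ?sqQ_gt0 // cabs_gt0 // S3_c0.
Qed.

Lemma zetaJ y : S3 y -> herm y w = 0 -> zeta y * cj (zeta y) = 1.
Proof. by move=> hy hh; rewrite mulcJ cabs_zeta // expr1n. Qed.

Lemma herm_chain y y' : S3 y -> herm y w = 0 -> S3 y' -> herm y' w = 0 ->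
  Sw%:C * herm y y' = Qw%:C * c0 y * cj (c0 y') * (1 - zeta y * cj (zeta y')).
Proof.
move=> hy hh hy' hh'.
have -> : Sw%:C * herm y y' = Sw%:C * (c0 y * cj (c0 y')) -
   Sw%:C * (c1 y * cj (c1 y') + c2 y * cj (c2 y')) by rewrite /herm; ring.
rewrite lag !chain_tau // !sig_zeta // !(conjM, conjK, conjR).
rewrite SwE -sqQQ; ring.
Qed.

Lemma dvis_chain y y' : S3 y -> herm y w = 0 -> S3 y' -> herm y' w = 0 ->
  dvis y y' ^+ 2 <= cabs (zeta y - zeta y') / 2.
Proof.
move=> hy hh hy' hh'.
have e := herm_chain hy hh hy' hh'.
have e2 : 1 - zeta y * cj (zeta y') = (zeta y' - zeta y) * cj (zeta y').
  by rewrite mulrBl zetaJ.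
have hc : Sw * cabs (herm y y') = Qw * cabs (c0 y) * cabs (c0 y') * cabs (zeta y - zeta y').
  have hN : cabs (zeta y' - zeta y) = cabs (zeta y - zeta y') by rewrite -cabsN opprB.
  have := congr1 (@cabs R) e; rewrite !cabsM e2 cabsM !cabsJ hN cabs_zeta // mulr1.
  by rewrite !cabsR !ger0_norm ?(ltW hQ) ?(ltW Sw_gt0) // => ->.
rewrite dvis_sq enorm_S3 ?(proj2 hy) // enorm_S3 ?(proj2 hy') //.
have y0 := cabs_gt0 (S3_c0 hy); have y0' := cabs_gt0 (S3_c0 hy').
have s2 : Num.sqrt 2 * cabs (c0 y) * (Num.sqrt 2 * cabs (c0 y')) = 2 * (cabs (c0 y) * cabs (c0 y')).
  have : Num.sqrt 2 * Num.sqrt 2 = 2 :> R by rewrite -expr2 sqr_sqrtr.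
  move=> h2.
  have -> : Num.sqrt 2 * cabs (c0 y) * (Num.sqrt 2 * cabs (c0 y')) = (Num.sqrt 2 * Num.sqrt 2) * (cabs (c0 y) * cabs (c0 y')) by ring.
  by rewrite h2.
rewrite s2 ler_pdivrMr ?mulr_gt0 //.
have hz := cabs_ge0 (zeta y - zeta y').
rewrite -(ler_pM2l Sw_gt0) hc.
have := Sw_ge; have := Sw_gt0; have := mulr_gt0 y0 y0'.
set c := cabs (zeta y - zeta y'); set A := cabs (c0 y) * cabs (c0 y').
move=> hA hS hQS.
have -> : Qw * cabs (c0 y) * cabs (c0 y') * c = Qw * (A * c) by rewrite /A; ring.
have -> : Sw * (c / 2 * (2 * A)) = Sw * (A * c) by field.
apply: ler_wpM2r => //; exact: mulr_ge0 (ltW hA) hz.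
Qed.


Variable x : C3 R.
Hypothesis hx : S3 x.

Definition Px := Sw%:C * c0 x - tau x * c0 w.
Definition qx := sqQ%:C * sig x.
Definition Ex := 2 * Sw * cabs (c0 x).
Definition mu y := Px * cj qx * zeta y.
Definition Mx := cabs Px * cabs qx.

Lemma Ex_gt0 : 0 < Ex.
Proof. by rewrite /Ex !mulr_gt0 // ?Sw_gt0 // cabs_gt0 // S3_c0. Qed.

Lemma herm_xy y : S3 y -> herm y w = 0 ->
  Sw%:C * herm x y = cj (c0 y) * (Px - qx * cj (zeta y)).
Proof.
move=> hy hh.
have -> : Sw%:C * herm x y = Sw%:C * (c0 x * cj (c0 y)) -
   Sw%:C * (c1 x * cj (c1 y) + c2 x * cj (c2 y)) by rewrite /herm; ring.
rewrite lag (chain_tau hh) (sig_zeta hy) !(conjM, conjK, conjR) /Px /qx; ring.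
Qed.

Lemma dvis_xy y : S3 y -> herm y w = 0 ->
  dvis x y ^+ 2 = cabs (Px - qx * cj (zeta y)) / Ex.
Proof.
move=> hy hh.
have hc : Sw * cabs (herm x y) = cabs (c0 y) * cabs (Px - qx * cj (zeta y)).
  have := congr1 (@cabs R) (herm_xy hy hh); rewrite !cabsM cabsJ cabsR.
  by rewrite ger0_norm ?(ltW Sw_gt0).
rewrite dvis_sq (enorm_S3 (proj2 hx)) (enorm_S3 (proj2 hy)).
have y0 := cabs_gt0 (S3_c0 hy); have x0 := cabs_gt0 (S3_c0 hx).
have h2 : Num.sqrt 2 * Num.sqrt 2 = 2 :> R by rewrite -expr2 sqr_sqrtr.
have -> : Num.sqrt 2 * cabs (c0 x) * (Num.sqrt 2 * cabs (c0 y)) = (Num.sqrt 2 * Num.sqrt 2) * (cabs (c0 x) * cabs (c0 y)) by ring.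
rewrite h2.
have -> : cabs (herm x y) = cabs (c0 y) * cabs (Px - qx * cj (zeta y)) / Sw.
  by rewrite -hc [Sw * _]mulrC mulfK // gt_eqF // Sw_gt0.
rewrite /Ex; field.
by rewrite !gt_eqF // Sw_gt0.
Qed.

Lemma Px_lb : Qw / 2 * cabs (c0 x) <= cabs Px.
Proof.
have e := lag x x.
have [xne hq] := hx; move: hq; rewrite qformE => hq.
rewrite !mulcJ -!realCD -realCM in e; move/realC_inj: e => e.
have ht : cabs (tau x) ^+ 2 <= Sw * cabs (c0 x) ^+ 2.
  have -> : cabs (c0 x) ^+ 2 = cabs (c1 x) ^+ 2 + cabs (c2 x) ^+ 2 by lra.
  rewrite e; have := sqr_ge0 (cabs (sig x)); lra.
have hw : cabs (c0 w) ^+ 2 = Sw - Qw by rewrite /Qw; ring.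
have hS := Sw_ge; have hS0 := Sw_gt0.
have x0 := cabs_ge0 (c0 x).
have h1 : cabs (tau x) * cabs (c0 w) <= cabs (c0 x) * (Sw - Qw / 2).
  have p0 : 0 <= cabs (c0 x) * (Sw - Qw / 2) by apply: mulr_ge0 => //; lra.
  rewrite -(ger0_norm (mulr_ge0 (cabs_ge0 (tau x)) (cabs_ge0 (c0 w)))).
  apply: sq_le_abs => //.
  rewrite exprMn hw exprMn.
  apply: (@le_trans _ _ (Sw * cabs (c0 x) ^+ 2 * (Sw - Qw))).
    by apply: ler_wpM2r => //; lra.
  have -> : (Sw - Qw / 2) ^+ 2 = Sw * (Sw - Qw) + Qw ^+ 2 / 4 by field.
  have := sqr_ge0 Qw; have := sqr_ge0 (cabs (c0 x)); nra.
have h2 := cabsB (Sw%:C * c0 x) (tau x * c0 w).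
rewrite !cabsM cabsR ger0_norm ?(ltW hS0) // in h2.
rewrite /Px; lra.
Qed.

Lemma cabs_expand y : S3 y -> herm y w = 0 ->
  cabs (Px - qx * cj (zeta y)) ^+ 2 = cabs Px ^+ 2 + cabs qx ^+ 2 - 2 * complex.Re (mu y).
Proof.
move=> hy hh.
have e : (Px - qx * cj (zeta y)) * cj (Px - qx * cj (zeta y)) =
   Px * cj Px + qx * cj qx * (zeta y * cj (zeta y)) - (mu y + cj (mu y)).
  rewrite /mu; move: Px qx (zeta y) => P q z.
  by rewrite !(conjB, conjM, conjK); ring.
rewrite zetaJ // mulr1 in e.
apply: realC_inj; rewrite realCB realCD !cabs_sqC ReE e; ring.
Qed.

Lemma mu_abs y : S3 y -> herm y w = 0 -> cabs (mu y) = Mx.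
Proof.
move=> hy hh; have := cabs_zeta hy hh; rewrite /mu /Mx.
by move: Px qx (zeta y) => P q z hz; rewrite !cabsM cabsJ hz mulr1.
Qed.

Lemma mu_diff y y' : S3 y -> herm y w = 0 -> S3 y' -> herm y' w = 0 ->
  cabs (mu y - mu y') = Mx * cabs (zeta y - zeta y').
Proof.
move=> *; have -> : mu y - mu y' = Px * cj qx * (zeta y - zeta y') by rewrite /mu; ring.
rewrite /Mx; move: Px qx (zeta y - zeta y') => P q z.
by rewrite !cabsM cabsJ.
Qed.

Definition aa y := complex.Re (mu y) / Mx.
Definition bb y := complex.Im (mu y) / Mx.

Lemma ab_circ y : 0 < Mx -> S3 y -> herm y w = 0 -> aa y ^+ 2 + bb y ^+ 2 = 1.
Proof.
move=> hM hy hh; have := cabs_sq (mu y); rewrite mu_abs // => e.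
by rewrite /aa /bb !expr_div_n -mulrDl -e divff // gt_eqF // exprn_gt0.
Qed.

Lemma zeta_ab y y' : 0 < Mx -> S3 y -> herm y w = 0 -> S3 y' -> herm y' w = 0 ->
  cabs (zeta y - zeta y') <= `|aa y - aa y'| + `|bb y - bb y'|.
Proof.
move=> hM hy hh hy' hh'.
have := cabs_le_ReIm (mu y - mu y'); rewrite mu_diff //.
have -> : complex.Re (mu y - mu y') = complex.Re (mu y) - complex.Re (mu y') by rewrite ReD ReN.
have -> : complex.Im (mu y - mu y') = complex.Im (mu y) - complex.Im (mu y').
  by case: (mu y); case: (mu y').
move=> h; have iM : 0 < Mx^-1 by rewrite invr_gt0.
rewrite /aa /bb -!mulrBl !normrM (gtr0_norm iM) -mulrDl.
by rewrite ler_pdivlMr // mulrC.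
Qed.

Lemma sq_mono (a b : R) : 0 <= a -> a <= b -> a ^+ 2 <= b ^+ 2.
Proof. by move=> a0 ab; rewrite !expr2; apply: ler_pM. Qed.

Lemma pow4_le (r d : R) : 0 < d -> d <= r -> r <= 1 -> (r + d) ^+ 4 - r ^+ 4 <= 15 * d.
Proof.
move=> d0 dr r1.
have -> : (r + d) ^+ 4 - r ^+ 4 = d * (4 * r ^+ 3 + 6 * r ^+ 2 * d + 4 * r * d ^+ 2 + d ^+ 3) by ring.
have r0 : 0 <= r by lra.
have h1 : r ^+ 3 <= 1 by rewrite exprn_ile1.
have h2 : r ^+ 2 <= 1 by rewrite exprn_ile1.
have h3 : d ^+ 2 <= 1 by rewrite exprn_ile1 //; lra.
have h4 : d ^+ 3 <= 1 by rewrite exprn_ile1 //; lra.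
have h5 : r ^+ 2 * d <= 1 by rewrite -(mulr1 1); apply: ler_pM => //; [apply: sqr_ge0| lra| lra].
have h6 : r * d ^+ 2 <= 1 by rewrite -(mulr1 1); apply: ler_pM => //; [apply: sqr_ge0].
rewrite [15 * d]mulrC; apply: ler_wpM2l; first lra.
lra.
Qed.

Section Key.
Variables (r d k0 eta : R).
Hypotheses (d0 : 0 < d) (dr : d <= r) (r1 : r <= 1) (k00 : 0 < k0)
  (k0le : k0 <= Qw / (4 * Sw)) (rdk : (r + d) ^+ 2 <= k0 / 2) (eta0 : 0 < eta).

Ltac grab := have d0' := d0; have dr' := dr; have r1' := r1; have k00' := k00;
  have k0le' := k0le; have rdk' := rdk; have eta0' := eta0.

Let A := chain w `&` annulus x r d.
Let cc y := cabs (Px - qx * cj (zeta y)).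

Lemma inA y : A y -> [/\ S3 y, herm y w = 0 & r <= dvis x y <= r + d].
Proof. by case=> [[hy hh] [_ hd]]. Qed.

Lemma F1 y : A y -> r ^+ 2 * Ex <= cc y <= (r + d) ^+ 2 * Ex.
Proof.
case/inA => hy hh /andP [h1 h2].
have e := dvis_xy hy hh.
have -> : cc y = dvis x y ^+ 2 * Ex by rewrite e divfK // gt_eqF // Ex_gt0.
grab; have hE := Ex_gt0; have r0 : 0 <= r by lra.
apply/andP; split; apply: ler_wpM2r; rewrite ?(ltW hE) //.
  by rewrite !expr2; apply: ler_pM.
by rewrite !expr2; apply: ler_pM => //; apply: sqrtr_ge0.
Qed.

Lemma F2 y : A y -> k0 * Ex <= cabs Px /\ k0 * Ex / 2 <= cabs qx.
Proof.
grab; move=> hA; have [hy hh _] := inA hA; have /andP [_ hc] := F1 hA.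
have hP : k0 * Ex <= cabs Px.
  apply: le_trans Px_lb; rewrite /Ex.
  have hS := Sw_gt0; have x0 := cabs_ge0 (c0 x).
  have -> : Qw / 2 * cabs (c0 x) = (Qw / (4 * Sw)) * (2 * Sw * cabs (c0 x)) by field; rewrite gt_eqF.
  by apply: ler_wpM2r => //; rewrite !mulr_ge0 // ltW.
split => //.
have h := cabsD (Px - qx * cj (zeta y)) (qx * cj (zeta y)).
rewrite subrK cabsM cabsJ cabs_zeta // mulr1 in h.
have hE := Ex_gt0.
have : (r + d) ^+ 2 * Ex <= k0 / 2 * Ex by apply: ler_wpM2r => //; exact: ltW.
rewrite /cc in hc; lra.
Qed.

Lemma MxA y : A y -> k0 ^+ 2 * Ex ^+ 2 / 2 <= Mx.
Proof.
move=> /F2 [h1 h2]; rewrite /Mx.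
have hE := Ex_gt0.
have -> : k0 ^+ 2 * Ex ^+ 2 / 2 = (k0 * Ex) * (k0 * Ex / 2) by ring.
have k0E : 0 <= k0 * Ex by apply: mulr_ge0; [exact: ltW | exact: ltW].
apply: ler_pM => //; by rewrite divr_ge0.
Qed.

Lemma Mx_pos y : A y -> 0 < Mx.
Proof.
move=> /MxA h; apply: lt_le_trans h.
have hE := Ex_gt0; apply: divr_gt0 => //; apply: mulr_gt0; exact: exprn_gt0.
Qed.

Lemma F3 y y' : A y -> A y' -> `|aa y - aa y'| <= 15 * d / k0 ^+ 2.
Proof.
move=> hA hA'; have [hy hh _] := inA hA; have [hy' hh' _] := inA hA'.
have hM := Mx_pos hA; have hMl := MxA hA; have hE := Ex_gt0.
have e := cabs_expand hy hh; have e' := cabs_expand hy' hh'.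
have /andP [a1 a2] := F1 hA; have /andP [b1 b2] := F1 hA'.
rewrite -/(cc y) in e; rewrite -/(cc y') in e'.
have c0 : 0 <= r ^+ 2 * Ex by rewrite mulr_ge0 ?sqr_ge0 // ltW.
have sq1 : (r ^+ 2 * Ex) ^+ 2 <= cc y ^+ 2 by apply: sq_mono.
have sq2 : cc y ^+ 2 <= ((r + d) ^+ 2 * Ex) ^+ 2 by apply: sq_mono => //; apply: le_trans a1.
have sq3 : (r ^+ 2 * Ex) ^+ 2 <= cc y' ^+ 2 by apply: sq_mono.
have sq4 : cc y' ^+ 2 <= ((r + d) ^+ 2 * Ex) ^+ 2 by apply: sq_mono => //; apply: le_trans b1.
have hW := pow4_le d0 dr r1.
have hdiff : 2 * `|complex.Re (mu y) - complex.Re (mu y')| <= ((r + d) ^+ 4 - r ^+ 4) * Ex ^+ 2.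
  have -> : 2 * `|complex.Re (mu y) - complex.Re (mu y')| = `|cc y' ^+ 2 - cc y ^+ 2|.
    rewrite e e'; have -> : cabs Px ^+ 2 + cabs qx ^+ 2 - 2 * complex.Re (mu y') -
      (cabs Px ^+ 2 + cabs qx ^+ 2 - 2 * complex.Re (mu y)) = 2 * (complex.Re (mu y) - complex.Re (mu y')) by ring.
    by rewrite normrM ger0_norm.
  have E1 : ((r + d) ^+ 2 * Ex) ^+ 2 = (r + d) ^+ 4 * Ex ^+ 2 by ring.
  have E2 : (r ^+ 2 * Ex) ^+ 2 = r ^+ 4 * Ex ^+ 2 by ring.
  rewrite E1 in sq2 sq4; rewrite E2 in sq1 sq3.
  rewrite ler_norml; apply/andP; split; lra.
have iM : 0 < Mx^-1 by rewrite invr_gt0.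
rewrite /aa -mulrBl normrM (gtr0_norm iM).
set D := `|_ - _| in hdiff *.
rewrite ler_pdivrMr //.
have hk2 : 0 < k0 ^+ 2 by rewrite exprn_gt0.
have hE2 : 0 < Ex ^+ 2 by rewrite exprn_gt0.
have h15 : 0 <= 15 * d / k0 ^+ 2 by apply: divr_ge0; [apply: mulr_ge0 => //; exact: ltW | exact: ltW].
apply: (@le_trans _ _ (15 * d / k0 ^+ 2 * (k0 ^+ 2 * Ex ^+ 2 / 2))); last first.
  by apply: ler_wpM2l.
have -> : 15 * d / k0 ^+ 2 * (k0 ^+ 2 * Ex ^+ 2 / 2) = 15 * d * Ex ^+ 2 / 2.
  by field; rewrite gt_eqF.
have : ((r + d) ^+ 4 - r ^+ 4) * Ex ^+ 2 <= 15 * d * Ex ^+ 2 by apply: ler_wpM2r => //; exact: ltW.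
lra.
Qed.

Let L := 15 * d / k0 ^+ 2.
Let l := Num.sqrt (30 * d / k0 ^+ 2).

Lemma L_ge0 : 0 <= L.
Proof. grab; apply: divr_ge0; [apply: mulr_ge0 => //; exact: ltW | exact: sqr_ge0]. Qed.

Lemma l2 : l ^+ 2 = 2 * L.
Proof.
grab; have h : 30 * d / k0 ^+ 2 = 2 * L by rewrite /L; ring.
by rewrite /l h sqr_sqrtr // mulr_ge0 // L_ge0.
Qed.

Lemma l_ge0 : 0 <= l. Proof. exact: sqrtr_ge0. Qed.

Lemma pair_base y y' : A y -> A y' ->
  [/\ aa y ^+ 2 + bb y ^+ 2 = 1, aa y' ^+ 2 + bb y' ^+ 2 = 1,
      dvis y y' ^+ 2 <= (`|aa y - aa y'| + `|bb y - bb y'|) / 2 &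
      `|aa y - aa y'| <= L].
Proof.
move=> hA hA'; have [hy hh _] := inA hA; have [hy' hh' _] := inA hA'.
have hM := Mx_pos hA.
split; [exact: ab_circ | exact: ab_circ | | exact: F3].
apply: (le_trans (dvis_chain hy hh hy' hh')).
by rewrite ler_pM2r // zeta_ab.
Qed.

Lemma abs_le1 (a b : R) : a ^+ 2 + b ^+ 2 = 1 -> `|a| <= 1.
Proof. by move=> h; apply: sq_le_abs => //; rewrite expr1n; have := sqr_ge0 b; lra. Qed.

Lemma sgn_prod (s u v : R) : s ^+ 2 = 1 -> 0 <= s * u -> 0 <= s * v -> 0 <= u * v.
Proof.
move=> hs h1 h2; have := mulr_ge0 h1 h2.
have -> : s * u * (s * v) = s ^+ 2 * (u * v) by ring.
by rewrite hs mul1r.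
Qed.

Lemma goodA (s : R) (N : nat) : s ^+ 2 = 1 -> (0 < N)%N -> 2 * l <= N%:R * eta ^+ 2 ->
  good eta [set y | A y /\ `|aa y| <= `|bb y| /\ 0 <= s * bb y] N (2 * l).
Proof.
grab; move=> hs hN hl.
apply: (good_piece (f := aa)) => //; first exact: l_ge0.
- move=> y y' [hA [h1 h2]] [hA' [h1' h2']].
  have [c1 c2 hd hL] := pair_base hA hA'.
  have hb := circ_a c1 c2 h1 h1' (sgn_prod hs h2 h2').
  by apply: (le_trans hd); lra.
- move=> y y' [hA [h1 h2]] [hA' [h1' h2']].
  have [c1 c2 hd hL] := pair_base hA hA'.
  have ha := abs_le1 c1; have ha' := abs_le1 c2.
  have hd2 : `|aa y - aa y'| <= 2.
    by apply: (le_trans (ler_normB _ _)); lra.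
  rewrite -(normr_id (aa y - aa y')); apply: sq_le_abs; first exact: l_ge0.
  rewrite l2 expr2; apply: (@le_trans _ _ (2 * `|aa y - aa y'|)).
    by apply: ler_wpM2r => //; exact: normr_ge0.
  by apply: ler_wpM2l.
Qed.

Lemma goodB (s t : R) (N : nat) : s ^+ 2 = 1 -> t ^+ 2 = 1 -> (0 < N)%N -> 2 * l <= N%:R * eta ^+ 2 ->
  good eta [set y | A y /\ `|bb y| <= `|aa y| /\ 0 <= s * aa y /\ 0 <= t * bb y] N (2 * l).
Proof.
grab; move=> hs ht hN hl.
apply: (good_piece (f := bb)) => //; first exact: l_ge0.
- move=> y y' [hA [h1 [h2 h3]]] [hA' [h1' [h2' h3']]].
  have [c1 c2 hd hL] := pair_base hA hA'.
  rewrite addrC in c1; rewrite addrC in c2.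
  have hb := circ_a c1 c2 h1 h1' (sgn_prod hs h2 h2').
  by apply: (le_trans hd); lra.
- move=> y y' [hA [h1 [h2 h3]]] [hA' [h1' [h2' h3']]].
  have [c1 c2 hd hL] := pair_base hA hA'.
  have hc := circ_c c1 c2 (sgn_prod ht h3 h3').
  apply: sq_le_abs; first exact: l_ge0.
  by rewrite l2; apply: (le_trans hc); apply: ler_wpM2l.
Qed.

Lemma key_good (N : nat) : (0 < N)%N -> 2 * l <= N%:R * eta ^+ 2 ->
  good eta A (N + N + N + N + N + N) (12 * l).
Proof.
grab; move=> hN hl.
have o1 : (1 : R) ^+ 2 = 1 by rewrite expr1n.
have o2 : (-1 : R) ^+ 2 = 1 by rewrite sqrrN expr1n.
have g1 := goodA o1 hN hl; have g2 := goodA o2 hN hl.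
have g3 := goodB o1 o1 hN hl; have g4 := goodB o1 o2 hN hl.
have g5 := goodB o2 o1 hN hl; have g6 := goodB o2 o2 hN hl.
have gu := good_union (good_union (good_union (good_union (good_union g1 g2) g3) g4) g5) g6.
have l0 := l_ge0.
have -> : 12 * l = 2 * l + 2 * l + 2 * l + 2 * l + 2 * l + 2 * l by ring.
apply: good_sub gu.
move=> y hA.
have [hab|hab] := lerP `|aa y| `|bb y|.
  have [hb|hb] := lerP 0 (bb y).
    by left; left; left; left; left; split => //; rewrite mul1r.
  by left; left; left; left; right; split => //; split => //; rewrite mulN1r; lra.
have hab' := ltW hab.
have [ha|ha] := lerP 0 (aa y); have [hb|hb] := lerP 0 (bb y).
- by left; left; left; right; split => //; split => //; split; rewrite ?mul1r ?mulN1r; lra.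
- by left; left; right; split => //; split => //; split; rewrite ?mul1r ?mulN1r; lra.
- by left; right; split => //; split => //; split; rewrite ?mul1r ?mulN1r; lra.
- by right; split => //; split => //; split; rewrite ?mul1r ?mulN1r; lra.
Qed.

Lemma key_approx : (haus2_approx eta A <= (12 * l)%:E)%E.
Proof.
grab.
pose N := (Num.Def.archi_bound (2 * l / eta ^+ 2)).+1.
apply: (good_approx (n := N + N + N + N + N + N)); apply: key_good => //.
have he : 0 < eta ^+ 2 by rewrite exprn_gt0.
have h0 : 0 <= 2 * l / eta ^+ 2 by rewrite divr_ge0 ?mulr_ge0 ?l_ge0 // ltW.
have := archi_boundP h0.
rewrite -ler_pdivrMr // => h; apply: ltW; apply: (lt_le_trans h).
by rewrite /N ler_nat.
Qed.

End Key.

End Geo.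


Section Cont.
Variable R : realType.
Definition T6 := ((R * R) * (R * R) * (R * R))%type.
Lemma cfst (U V : topologicalType) : continuous (fun p : U * V => p.1).
Proof. move=> p; exact: cvg_fst. Qed.
Lemma csnd (U V : topologicalType) : continuous (fun p : U * V => p.2).
Proof. move=> p; exact: cvg_snd. Qed.
Lemma ccomp (U V W : topologicalType) (f : U -> V) (g : V -> W) :
  continuous f -> continuous g -> continuous (fun x => g (f x)).
Proof. by move=> cf cg x; apply: (continuous_comp (cf x) (cg _)). Qed.
Lemma csq (U : topologicalType) (f : U -> R) : continuous f -> continuous (fun x => f x ^+ 2).
Proof. move=> cf x.
have -> : (fun x => f x ^+ 2) = (f \* f) by apply: funext => y; rewrite /= expr2.
exact: (continuousM (cf x) (cf x)).
Qed.
Lemma cadd (U : topologicalType) (f g : U -> R) : continuous f -> continuous g -> continuous (fun x => f x + g x).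
Proof. move=> cf cg x; exact: (continuousD (cf x) (cg x)). Qed.
Lemma csub (U : topologicalType) (f g : U -> R) : continuous f -> continuous g -> continuous (fun x => f x - g x).
Proof. move=> cf cg x; exact: (continuousB (cf x) (cg x)). Qed.

Definition Sf (p : T6) : R := p.1.2.1 ^+ 2 + p.1.2.2 ^+ 2 + p.2.1 ^+ 2 + p.2.2 ^+ 2.
Definition Qf (p : T6) : R := Sf p - p.1.1.1 ^+ 2 - p.1.1.2 ^+ 2.

Lemma Sf_cont : continuous Sf.
Proof.
have c3 := ccomp (ccomp (@cfst ((R*R)*(R*R))%type (R*R)%type) (@csnd (R*R)%type (R*R)%type)) (@cfst R R).
have c4 := ccomp (ccomp (@cfst ((R*R)*(R*R))%type (R*R)%type) (@csnd (R*R)%type (R*R)%type)) (@csnd R R).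
have c5 := ccomp (@csnd ((R*R)*(R*R))%type (R*R)%type) (@cfst R R).
have c6 := ccomp (@csnd ((R*R)*(R*R))%type (R*R)%type) (@csnd R R).
rewrite /Sf.
apply: cadd; last by apply: csq.
apply: cadd; last by apply: csq.
apply: cadd; by apply: csq.
Qed.

Lemma Qf_cont : continuous Qf.
Proof.
have c1 := ccomp (ccomp (@cfst ((R*R)*(R*R))%type (R*R)%type) (@cfst (R*R)%type (R*R)%type)) (@cfst R R).
have c2 := ccomp (ccomp (@cfst ((R*R)*(R*R))%type (R*R)%type) (@cfst (R*R)%type (R*R)%type)) (@csnd R R).
rewrite /Qf.
apply: csub; last first. apply: csq. exact: c2.
apply: csub; last first. apply: csq. exact: c1.
exact: Sf_cont.
Qed.

Lemma Sf_realify (w : C3 R) : Sf (realify w) = Sw w.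
Proof. rewrite /Sf /Sw /realify /= !cabs_sq /c1 /c2; ring. Qed.
Lemma Qf_realify (w : C3 R) : Qf (realify w) = Qw w.
Proof. by rewrite /Qf Sf_realify /Qw /realify /= !cabs_sq; ring. Qed.
End Cont.

Unset Implicit Arguments. Set Strict Implicit.

Theorem lemma5p20 (R : realType) (K : set (C3 R)) :
  compact (@realify R @` K) ->
  (forall w, K w -> w <> C3_zero R /\ qform w < 0) ->
  exists r0 : R, exists C : R, 0 < r0 /\
    forall (x w : C3 R) (r delta : R),
      S3 x -> K w -> 0 < delta -> delta <= r -> r <= r0 ->
      (eta_L w (annulus x r delta) <= (C * Num.sqrt delta)%:E)%E.
Proof.
move=> cK hK.
have [[w1 Kw1]|nK] := pselect (exists w, K w); last first.
  exists 1, 0; split => // x w r d _ Kw; exfalso; apply: nK; by exists w.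
have hQpos w : K w -> 0 < Qw w by move=> /hK [_ h]; rewrite QwE; lra.
have ne : (@realify R @` K) !=set0 by exists (realify w1); exists w1.
have [cmin cminA hmin] := compact_EVT_min ne cK (continuous_subspaceT (@Qf_cont R)).
have [cmax cmaxA hmax] := compact_EVT_max ne cK (continuous_subspaceT (@Sf_cont R)).
move: cminA cmaxA hmin hmax; rewrite !inE => -[wm Kwm <-] [wM KwM <-] hmin hmax.
rewrite Qf_realify in hmin; rewrite Sf_realify in hmax.
set Q0 := Qw wm in hmin; set S0 := Sw wM in hmax.
have hQw w : K w -> Q0 <= Qw w.
  by move=> Kw; rewrite -Qf_realify; apply: hmin; rewrite inE; exists w.
have hSw w : K w -> Sw w <= S0.
  by move=> Kw; rewrite -Sf_realify; apply: hmax; rewrite inE; exists w.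
have Q00 : 0 < Q0 by apply: hQpos.
have QS (w : C3 R) : Qw w <= Sw w by rewrite /Qw; have := sqr_ge0 (cabs (c0 w)); lra.
have S00 : 0 < S0 by have := hQw _ Kwm; have := QS wm; have := hSw _ Kwm; lra.
pose k0 := Q0 / (4 * S0).
have k00 : 0 < k0 by rewrite /k0 divr_gt0 // mulr_gt0.
have k0le w : K w -> k0 <= Qw w / (4 * Sw w).
  move=> Kw; have hS := lt_le_trans (hQpos _ Kw) (QS w).
  rewrite /k0 ler_pdivrMr ?mulr_gt0 // mulrAC ler_pdivlMr ?mulr_gt0 //.
  apply: ler_pM => //; [exact: ltW| rewrite mulr_ge0 // ltW // | exact: hQw |].
  by rewrite ler_pM2l // hSw.
have k0le4 : k0 <= 1 / 4.
  have := k0le _ Kwm; have hS := lt_le_trans (hQpos _ Kwm) (QS wm).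
  move=> h; apply: le_trans h _.
  rewrite ler_pdivrMr ?mulr_gt0 //.
  have := QS wm; lra.
pose r0 := Num.sqrt (k0 / 8).
exists r0, (12 * Num.sqrt (30 / k0 ^+ 2)); split.
  by rewrite sqrtr_gt0 divr_gt0.
move=> x w r d hx Kw d0 dr rr0.
have r0sq : r0 ^+ 2 = k0 / 8 by rewrite sqr_sqrtr // divr_ge0 // ltW.
have r01 : r0 <= 1.
  rewrite -(ger0_norm (sqrtr_ge0 _ : 0 <= r0)); apply: sq_le_abs => //.
  rewrite r0sq expr1n; lra.
have r1 : r <= 1 by apply: le_trans r01.
have rdk : (r + d) ^+ 2 <= k0 / 2.
  have h : r + d <= 2 * r0 by lra.
  have : (r + d) ^+ 2 <= (2 * r0) ^+ 2 by apply: sq_mono => //; lra.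
  by rewrite exprMn r0sq; lra.
rewrite /eta_L; apply: haus_le => eta eta0.
have -> : 12 * Num.sqrt (30 / k0 ^+ 2) * Num.sqrt d = 12 * Num.sqrt (30 * d / k0 ^+ 2).
  rewrite -mulrA -sqrtrM; last by rewrite divr_ge0 // sqr_ge0.
  by congr (_ * Num.sqrt _); ring.
exact: (key_approx (hQpos _ Kw) hx d0 dr r1 k00 (k0le _ Kw) rdk eta0).
Qed.
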